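(* Let $K\subseteq L$ be a finite extension of $F$-finite fields of characteristic $p>0$ and let $\mathfrak T\colon L\to K$ be a non-zero $K$-linear map. Then every $K$-linear map $\phi\colon K^{1/p^e}\to K$ has a unique $\mathfrak T$-transpose, i.e. there is a unique $L$-linear map $\phi_{\mathfrak T}\colon L^{1/p^e}\to L$ with $\mathfrak T\circ\phi_{\mathfrak T}=\phi\circ\mathfrak T^{1/p^e}$.
   Context: $K^{1/p^e}\subseteq L^{1/p^e}$ are the fields of $p^e$-th roots in an algebraic closure; $\mathfrak T^{1/p^e}\colon L^{1/p^e}\to K^{1/p^e}$ is $x^{1/p^e}\mapsto\mathfrak T(x)^{1/p^e}$. $F$-finite means $[K:K^p]<\infty$. *)

(* Defs.v *)
(* Ambient algebraically closed field Omega of char p;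
   K, L, K^{1/p^e}, L^{1/p^e} are subsets (subfields) of Omega. *)
From HB Require Import structures.
From mathcomp Require Import all_boot all_order all_algebra.
Set Implicit Arguments. Unset Strict Implicit. Unset Printing Implicit Defensive.
Import GRing.Theory.
Local Open Scope ring_scope.

Section Defs.
Variable Omega : closedFieldType.

Definition is_subfield (S : Omega -> Prop) : Prop :=
  [/\ S 0, S 1,
      forall x y, S x -> S y -> S (x - y),
      forall x y, S x -> S y -> S (x * y) &
      forall x, S x -> S x^-1].

Definition finite_over (S V : Omega -> Prop) : Prop :=
  exists s : seq Omega, (forall i, (i < size s)%N -> V s`_i) /\
    forall v, V v -> exists c : nat -> Omega,
      (forall i, S (c i)) /\ v = \sum_(i < size s) c i * s`_i.

Definition frob_image (p : nat) (S : Omega -> Prop) : Omega -> Prop :=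
  fun y => exists2 x, S x & y = x ^+ p.

Definition F_finite (p : nat) (S : Omega -> Prop) : Prop :=
  finite_over (frob_image p S) S.

(* S^{1/n} = { x in Omega | x^n in S } (inside the algebraic closure) *)
Definition root_set (n : nat) (S : Omega -> Prop) : Omega -> Prop :=
  fun x => S (x ^+ n).

(* f : A -> B is S-linear (S acting by multiplication in Omega);
   f is a function on Omega, only its restriction to A matters *)
Definition linear_on (S A B : Omega -> Prop) (f : Omega -> Omega) : Prop :=
  [/\ forall x, A x -> B (f x),
      forall x y, A x -> A y -> f (x + y) = f x + f y &
      forall k x, S k -> A x -> f (k * x) = k * f x].

Lemma exists_nth_root (n : nat) (x : Omega) :
  exists y : Omega, (y ^+ n == x) || (n == 0)%N.
Proof.
case: n => [|n]; first by exists 0; rewrite orbT.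
have /closed_rootP [y Hy] : size ('X^(n.+1) - x%:P : {poly Omega}) != 1%N.
  by rewrite size_XnsubC.
exists y; apply/orP; left.
by move: Hy; rewrite /root !hornerE subr_eq0.
Qed.

(* the (unique, in char p with n = p^e) n-th root of x in Omega *)
Definition nth_root (n : nat) (x : Omega) : Omega :=
  xchoose (exists_nth_root n x).

Definition root_map (n : nat) (T : Omega -> Omega) : Omega -> Omega :=
  fun y => nth_root n (T (y ^+ n)).

End Defs.

(* Main.v *)
Require Import Defs.
From HB Require Import structures.
From mathcomp Require Import all_boot all_order all_algebra.
Import GRing.Theory.
Local Open Scope ring_scope.
From mathcomp Require Import boolp.
From Stdlib Require Import Classical.
From mathcomp Require Import ring.
Set Implicit Arguments. Unset Strict Implicit.
Section KFsec.
Variables (Omega : closedFieldType) (K : Omega -> Prop).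
Definition Kc (x : Omega) : Prop :=
  forall S, is_subfield S -> (forall y, K y -> S y) -> S x.
Definition Kcb : {pred Omega} := fun x => `[< Kc x >].
Lemma Kcb_divring : divring_closed Kcb.
Proof.
split.
- by apply/asboolP => S [] //.
- by move=> x y /asboolP Hx /asboolP Hy; apply/asboolP => S HS HKS; case: (HS) => _ _ H _ _; apply: H; [apply: Hx|apply: Hy].
- by move=> x y /asboolP Hx /asboolP Hy; apply/asboolP => S HS HKS; case: (HS) => _ _ _ H Hi; apply: H; [apply: Hx| apply: Hi; apply: Hy].
Qed.
HB.instance Definition _ := GRing.isDivringClosed.Build Omega Kcb Kcb_divring.
Record KF := MkKF { kval : Omega; kvalP : Kcb kval }.
HB.instance Definition _ := [isSub for kval].
HB.instance Definition _ := [Choice of KF by <:].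
HB.instance Definition _ := [SubChoice_isSubComUnitRing of KF by <:].
HB.instance Definition _ := [SubComUnitRing_isSubIntegralDomain of KF by <:].
HB.instance Definition _ := [SubIntegralDomain_isSubField of KF by <:].
End KFsec.

Section Aux.
Variable Omega : closedFieldType.
Implicit Types (S A B : Omega -> Prop) (x y : Omega).

Lemma sf0 S : is_subfield S -> S 0. Proof. by case. Qed.
Lemma sf1 S : is_subfield S -> S 1. Proof. by case. Qed.
Lemma sfB S x y : is_subfield S -> S x -> S y -> S (x - y). Proof. by case=> _ _ h _ _; apply: h. Qed.
Lemma sfM S x y : is_subfield S -> S x -> S y -> S (x * y). Proof. by case=> _ _ _ h _; apply: h. Qed.
Lemma sfV S x : is_subfield S -> S x -> S x^-1. Proof. by case=> _ _ _ _ h; apply: h. Qed.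
Lemma sfN S x : is_subfield S -> S x -> S (- x).
Proof. by move=> hS hx; rewrite -sub0r; apply: sfB => //; apply: sf0. Qed.
Lemma sfD S x y : is_subfield S -> S x -> S y -> S (x + y).
Proof. by move=> hS hx hy; rewrite -[y]opprK; apply: sfB => //; apply: sfN. Qed.
Lemma sfX S x n : is_subfield S -> S x -> S (x ^+ n).
Proof.
move=> hS hx; elim: n => [|n IH]; first by rewrite expr0; apply: sf1.
by rewrite exprS; apply: sfM.
Qed.
Lemma sf_sum S n (F : 'I_n -> Omega) : is_subfield S -> (forall i, S (F i)) ->
  S (\sum_(i < n) F i).
Proof.
move=> hS hF; apply: (big_ind S); [exact: sf0 | by move=> *; apply: sfD | by []].
Qed.

Lemma lin0 S A B f : is_subfield A -> linear_on S A B f -> f 0 = 0.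
Proof.
move=> hA [_ hadd _]; have := hadd 0 0 (sf0 hA) (sf0 hA).
by rewrite addr0 -{1}[f 0]addr0 => /addrI.
Qed.

Lemma lin_sum S A B f n (k x : nat -> Omega) : is_subfield A ->
  (forall z, S z -> A z) -> linear_on S A B f ->
  (forall i, S (k i)) -> (forall i, (i < n)%N -> A (x i)) ->
  f (\sum_(i < n) k i * x i) = \sum_(i < n) k i * f (x i).
Proof.
move=> hA SA hf hk; elim: n => [|n IH] hx.
  by rewrite !big_ord0; apply: lin0 hf.
case: (hf) => _ hadd hsc.
rewrite !big_ord_recr /= hadd ?hsc ?IH //.
- by move=> i lt; apply: hx; apply: ltnW.
- by apply: hx.
- apply: sf_sum => // i; apply: sfM => //; first by apply: SA.
  by apply: hx; apply: (ltn_trans (ltn_ord i)).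
- by apply: sfM => //; [apply: SA | apply: hx].
Qed.
End Aux.

Lemma add_sum (Omega : closedFieldType) (S A B : Omega -> Prop) f n
  (F : 'I_n -> Omega) : is_subfield A -> linear_on S A B f ->
  (forall i, A (F i)) -> f (\sum_(i < n) F i) = \sum_(i < n) f (F i).
Proof.
move=> hA hf hF.
pose R a b := A a /\ f a = b.
suff [] : R (\sum_(i < n) F i) (\sum_(i < n) f (F i)) by [].
apply: (big_ind2 R).
- by split; [apply: sf0 | apply: lin0 hf].
- move=> a b a' b' [Aa fa] [Aa' fa']; split; first by apply: sfD.
  by case: hf => _ h _; rewrite h // fa fa'.
- by move=> i _; split.
Qed.

Lemma lin_sum_ord (Omega : closedFieldType) (S A B : Omega -> Prop) f n
  (k x : 'I_n -> Omega) : is_subfield A ->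
  (forall z, S z -> A z) -> linear_on S A B f ->
  (forall i, S (k i)) -> (forall i, A (x i)) ->
  f (\sum_(i < n) k i * x i) = \sum_(i < n) k i * f (x i).
Proof.
move=> hA SA hf hk hx; rewrite (add_sum hA hf).
  by apply: eq_bigr => i _; case: hf => _ _ h; apply: h.
by move=> i; apply: sfM => //; apply: SA.
Qed.
Section Main.
Variables (Omega : closedFieldType) (K L : Omega -> Prop) (T : Omega -> Omega).
Hypotheses (HK : is_subfield K) (HL : is_subfield L) (KL : forall x, K x -> L x)
  (HLK : finite_over K L) (hT : linear_on K L K T) (Tnz : exists2 x, L x & T x != 0).

Lemma T_in x : L x -> K (T x). Proof. by case: hT => h _ _; apply: h. Qed.
Lemma T_add x y : L x -> L y -> T (x + y) = T x + T y.
Proof. by case: hT => _ h _; apply: h. Qed.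
Lemma T_scale k x : K k -> L x -> T (k * x) = k * T x.
Proof. by case: hT => _ _ h; apply: h. Qed.

Lemma T_sub x y : L x -> L y -> T (x - y) = T x - T y.
Proof.
move=> Lx Ly; have Km1 : K (-1) by apply: (sfN HK); apply: (sf1 HK).
have Ly' : L (-1 * y) by apply: (sfM HL) => //; apply: (KL).
by rewrite -[- y]mulN1r T_add // T_scale // mulN1r.
Qed.

Lemma T_uniq c c' : L c -> L c' -> (forall l, L l -> T (c * l) = T (c' * l)) -> c = c'.
Proof.
move=> Lc Lc' h; apply/eqP; rewrite -subr_eq0; apply/negP => /negP d0.
case: Tnz => x Lx Tx.
have Ld : L (c - c') by apply: (sfB HL).
have Ll : L ((c - c')^-1 * x) by apply: (sfM HL) => //; apply: (sfV HL).
have : T ((c - c') * ((c - c')^-1 * x)) = 0.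
  rewrite mulrBl T_sub ?h ?subrr //; by apply: (sfM HL).
by rewrite mulrA mulfV // mul1r => Tx0; rewrite Tx0 eqxx in Tx.
Qed.

Let KFt := KF K.
Let toK (x : Omega) : KFt := insubd 0 x.
Lemma toKK x : K x -> val (toK x) = x.
Proof.
move=> kx; rewrite insubdK //; apply/asboolP => S hS KS; exact: KS.
Qed.
Lemma valK (u : KFt) : K (val u).
Proof. by case: u => x /= /asboolP; apply. Qed.

Lemma dual (lam : Omega -> Omega) : linear_on K L K lam ->
  exists2 c, L c & forall l, L l -> T (c * l) = lam l.
Proof.
move=> hlam.
have [s [Hs Hspan]] := HLK.
set n := size s in Hs Hspan.
have lam_in x : L x -> K (lam x) by case: hlam => h _ _; apply: h.
pose M : 'M[KFt]_n := \matrix_(i, j) toK (T (s`_i * s`_j)).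
pose v : 'rV[KFt]_n := \row_j toK (lam s`_j).
have Ms (i j : 'I_n) : kval (M i j) = T (s`_i * s`_j).
  rewrite mxE; apply: toKK; apply: T_in; apply: (sfM HL) => //; apply: (Hs); apply: ltn_ord.
have vs (j : 'I_n) : kval (v 0 j) = lam s`_j.
  rewrite mxE; apply: toKK; apply: lam_in; apply: (Hs); apply: ltn_ord.
have ext (g : Omega -> Omega) (c : Omega) : linear_on K L K g -> L c ->
    (forall k : 'I_n, T (c * s`_k) = g s`_k) -> forall l, L l -> T (c * l) = g l.
  move=> hg Lc hc l Ll; have [d [Kd ->]] := Hspan l Ll.
  rewrite mulr_sumr.
  under eq_bigr do rewrite mulrCA.
  rewrite (lin_sum (k := d) (x := fun i => c * s`_i) HL KL hT) //; last first.
    by move=> i lt; apply: (sfM HL) => //; apply: (Hs).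
  rewrite (lin_sum (k := d) (x := fun i => s`_i) HL KL hg) //.
  by apply: eq_bigr => k _; rewrite hc.
have lin_zero : linear_on K L K (fun _ => 0).
  by split=> [x _|x y _ _|k x _ _]; [apply: (sf0 HK)| rewrite addr0 | rewrite mulr0].
have key m (w : 'M[KFt]_(n, m)) : M *m w = 0 -> v *m w = 0.
  move=> Mw; apply/matrixP => i j.
  pose c := \sum_(k < n) val (w k j) * s`_k.
  have Lc : L c by apply: sf_sum HL _ => k; apply: (sfM HL) => //; [apply: (KL); apply: valK | apply: (Hs)].
  have Tc l : L l -> T (c * l) = T (0 * l).
    rewrite mul0r (lin0 HL hT); move: l; apply: (ext _ c lin_zero Lc) => k.
    rewrite /c mulr_suml.
    under eq_bigr do rewrite -mulrA.
    rewrite (lin_sum_ord (k := fun i => val (w i j)) (x := fun i => s`_i * s`_k) HL KL hT); first last.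
    + by move=> z; apply: (sfM HL); apply: (Hs).
    + by move=> z; apply: valK.
    transitivity (val ((M *m w) k j)); last by rewrite Mw mxE rmorph0.
    rewrite mxE rmorph_sum; apply: eq_bigr => z _.
    rewrite rmorphM [RHS]mulrC; congr (_ * _); rewrite mulrC; symmetry; exact: Ms.
  have c0 : c = 0 by apply: (T_uniq Lc (sf0 HL) Tc).
  rewrite [i]ord1 !mxE; apply: val_inj; rewrite rmorph0 rmorph_sum /=.
  transitivity (lam c); last by rewrite c0 (lin0 HL hlam).
  rewrite (lin_sum_ord (k := fun i => val (w i j)) (x := fun i => s`_i) HL KL hlam); first last.
  + by move=> z; apply: (Hs).
  + by move=> z; apply: valK.
  by apply: eq_bigr => k _; rewrite (vs k) mulrC.
have vM : (v <= M)%MS by rewrite submxE; apply/eqP/key/mulmx_coker.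
have [a va] := submxP vM.
pose c := \sum_(k < n) val (a 0 k) * s`_k.
have Lc : L c.
  by apply: sf_sum HL _ => k; apply: (sfM HL) => //; [apply: (KL); apply: valK | apply: (Hs)].
exists c => //; apply: ext => // k.
rewrite /c mulr_suml.
under eq_bigr do rewrite -mulrA.
rewrite (lin_sum_ord (k := fun i => val (a 0 i)) (x := fun i => s`_i * s`_k) HL KL hT); first last.
+ by move=> z; apply: (sfM HL); apply: (Hs).
+ by move=> z; apply: valK.
transitivity (val ((a *m M) 0 k)); last by rewrite -va; exact: vs.
rewrite mxE rmorph_sum; apply: eq_bigr => z _.
rewrite rmorphM; congr (_ * _); symmetry; exact: Ms.
Qed.

Variables (p e : nat) (phi : Omega -> Omega).
Hypotheses (Hp : p \in [pchar Omega])
  (hphi : linear_on K (root_set (p ^ e) K) K phi).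
Let q := (p ^ e)%N.

Lemma q_gt0 : (0 < q)%N.
Proof. by rewrite expn_gt0 prime_gt0 // (pcharf_prime Hp). Qed.
Lemma q_nat : [pchar Omega].-nat q.
Proof. by rewrite pnatX (pnatE _ (pcharf_prime Hp)) Hp. Qed.
Lemma frobD (x y : Omega) : (x + y) ^+ q = x ^+ q + y ^+ q.
Proof. exact: exprDn_pchar q_nat. Qed.
Lemma frob_inj (x y : Omega) : x ^+ q = y ^+ q -> x = y.
Proof.
move=> h; have h2 := frobD (x - y) y; rewrite subrK h -[X in X = _]add0r in h2.
move/addIr/esym/eqP: h2; rewrite expf_eq0 q_gt0 subr_eq0 /=.
by move/eqP.
Qed.
Lemma nth_rootE (z x : Omega) : z ^+ q = x -> nth_root q x = z.
Proof.
move=> h; have := xchooseP (exists_nth_root q x).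
case/orP => [/eqP h2|]; last by move=> /eqP q0; move: q_gt0; rewrite q0.
by apply: frob_inj; rewrite h h2.
Qed.
Lemma nth_rootK (x : Omega) : nth_root q x ^+ q = x.
Proof.
have := xchooseP (exists_nth_root q x).
case/orP => [/eqP h2|]; last by move=> /eqP q0; move: q_gt0; rewrite q0.
exact: h2.
Qed.

Let rm := root_map q T.
Lemma rm_K y : root_set q L y -> root_set q K (rm y).
Proof. by rewrite /root_set /rm /root_map nth_rootK; apply: T_in. Qed.
Lemma rm_add y1 y2 : root_set q L y1 -> root_set q L y2 ->
  rm (y1 + y2) = rm y1 + rm y2.
Proof.
move=> h1 h2; rewrite /rm /root_map; apply: nth_rootE.
by rewrite frobD !nth_rootK frobD T_add.
Qed.
Lemma rm_scale k y : K k -> root_set q L y -> rm (k * y) = k * rm y.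
Proof.
move=> hk hy; rewrite /rm /root_map; apply: nth_rootE.
rewrite exprMn nth_rootK exprMn T_scale //; exact: sfX.
Qed.
Lemma rsM l y : L l -> root_set q L y -> root_set q L (l * y).
Proof. by move=> hl hy; rewrite /root_set exprMn; apply: (sfM HL) => //; apply: (sfX _ HL). Qed.
Lemma rsD y1 y2 : root_set q L y1 -> root_set q L y2 -> root_set q L (y1 + y2).
Proof. by move=> h1 h2; rewrite /root_set frobD; apply: (sfD HL). Qed.

Lemma phi_in z : root_set q K z -> K (phi z).
Proof. by case: hphi => h _ _; apply: h. Qed.
Lemma phi_add z1 z2 : root_set q K z1 -> root_set q K z2 -> phi (z1 + z2) = phi z1 + phi z2.
Proof. by case: hphi => _ h _; apply: h. Qed.
Lemma phi_scale k z : K k -> root_set q K z -> phi (k * z) = k * phi z.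
Proof. by case: hphi => _ _ h; apply: h. Qed.

Definition lamy y := fun l => phi (rm (l * y)).
Lemma lamy_lin y : root_set q L y -> linear_on K L K (lamy y).
Proof.
move=> hy; split.
- by move=> l hl; apply: phi_in; apply: rm_K; apply: rsM.
- move=> l1 l2 h1 h2; rewrite /lamy mulrDl rm_add ?phi_add //; try apply: rsM => //.
  + by apply: rm_K; apply: rsM.
  + by apply: rm_K; apply: rsM.
- move=> k l hk hl; rewrite /lamy -mulrA rm_scale ?phi_scale //.
  + by apply: rm_K; apply: rsM.
  + by apply: rsM.
Qed.

Lemma main_sec :
    exists phiT : Omega -> Omega,
      [/\ linear_on L (root_set (p ^ e) L) L phiT,
          (forall y, root_set (p ^ e) L y ->
              T (phiT y) = phi (root_map (p ^ e) T y)) &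
          forall psi : Omega -> Omega,
            linear_on L (root_set (p ^ e) L) L psi ->
            (forall y, root_set (p ^ e) L y ->
              T (psi y) = phi (root_map (p ^ e) T y)) ->
            forall y, root_set (p ^ e) L y -> psi y = phiT y].
Proof.
have ex y : exists c, root_set q L y -> L c /\ forall l, L l -> T (c * l) = lamy y l.
  case: (classic (root_set q L y)) => hy.
    by have [c Lc hc] := dual (lamy_lin hy); exists c.
  by exists 0.
have [f hf] := choice ex.
exists f; split.
- split.
  + by move=> y hy; case: (hf y hy).
  + move=> y1 y2 h1 h2; have [L1 T1] := hf y1 h1; have [L2 T2] := hf y2 h2.
    have [L12 T12] := hf _ (rsD h1 h2).
    apply: T_uniq => //; first by apply: (sfD HL).
    move=> l hl; rewrite T12 // mulrDl T_add; try by apply: (sfM HL).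
    rewrite T1 // T2 // /lamy mulrDr rm_add ?phi_add //; try by apply: rsM.
    * by apply: rm_K; apply: rsM.
    * by apply: rm_K; apply: rsM.
  + move=> k y hk hy; have [L1 T1] := hf y hy.
    have [L2 T2] := hf _ (rsM hk hy).
    apply: T_uniq => //; first by apply: (sfM HL).
    move=> l hl; rewrite T2 // /lamy mulrA -/(lamy y (l * k)) -T1; last by apply: (sfM HL).
    by congr (T _); ring.
- move=> y hy; have [L1 T1] := hf y hy.
  by rewrite -[f y]mulr1 T1; [rewrite /lamy mul1r | exact: (sf1 HL)].
- move=> psi hpsi hT2 y hy; have [L1 T1] := hf y hy.
  case: hpsi => psi_in _ psi_sc.
  apply: T_uniq => //; first by apply: psi_in.
  move=> l hl; rewrite T1 // mulrC -psi_sc //.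
  by rewrite hT2 //; apply: rsM.
Qed.
End Main.
Theorem proposition5p4 (Omega : closedFieldType) (p : nat)
  (K L : Omega -> Prop) (T : Omega -> Omega) :
  p \in [pchar Omega] ->
  is_subfield K -> is_subfield L -> (forall x, K x -> L x) ->
  finite_over K L ->
  F_finite p K -> F_finite p L ->
  linear_on K L K T ->
  (exists2 x, L x & T x != 0) ->
  forall (e : nat) (phi : Omega -> Omega),
    linear_on K (root_set (p ^ e) K) K phi ->
    exists phiT : Omega -> Omega,
      [/\ linear_on L (root_set (p ^ e) L) L phiT,
          (forall y, root_set (p ^ e) L y ->
              T (phiT y) = phi (root_map (p ^ e) T y)) &
          forall psi : Omega -> Omega,
            linear_on L (root_set (p ^ e) L) L psi ->
            (forall y, root_set (p ^ e) L y ->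
              T (psi y) = phi (root_map (p ^ e) T y)) ->
            forall y, root_set (p ^ e) L y -> psi y = phiT y].
Proof.
move=> Hp HK HL KL HLK _ _ hT Tnz e phi hphi.
exact: (main_sec HK HL KL HLK hT Tnz Hp hphi).
Qed.
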